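(* Let $G$ be a subgroup of $\mathrm{Aut}(T)$, $X$ a minimal compact $G$-space and $\Phi:X\to\mathrm{Sub}(G)$ a lower semi-continuous $G$-equivariant map. Then the map $X\to\mathcal{F}(\partial T)$, $x\mapsto\mathrm{Fix}(\Phi(x))$, is continuous.
   Context: $T$ is a locally finite rooted tree, $\mathrm{Aut}(T)$ its root-fixing automorphism group, and $\partial T$ its boundary. $\mathrm{Sub}(G)$ is the space of subgroups of $G$ with the Chabauty topology (product topology on $\{0,1\}^G$) and conjugation action. $\Phi$ is lower semi-continuous if for every $g\in G$ the set $\{x\in X:g\in\Phi(x)\}$ is open. $\mathcal{F}(\partial T)$ is the space of closed subsets of $\partial T$ with the Hausdorff (Vietoris) topology, and $\mathrm{Fix}(H)$ denotes the set of points of $\partial T$ fixed by $H$. *)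

(* Defs.v *)
From HB Require Import structures.
From mathcomp Require Import all_boot all_order all_fingroup.
From mathcomp Require Import all_classical all_reals topology.
Set Implicit Arguments. Unset Strict Implicit. Unset Printing Implicit Defensive.
Local Open Scope classical_set_scope.

(** Level [n] is the finite set [L n] of vertices at distance [n] from the
   root, [par n : L n.+1 -> L n] sends a vertex to its parent, and level 0
   consists of the root alone.  Finiteness of every level is exactly local
   finiteness of a rooted tree. *)
Record rtree := RTree {
  lvl : nat -> finType;
  par : forall n, lvl n.+1 -> lvl n;
  root_unique : #|lvl 0| = 1 }.

Section Tree.
Variable T : rtree.

Definition autT := forall n, {perm lvl T n}.

(** Root-fixing automorphisms of [T]: level-wise permutations commuting
   with the parent map. *)
Definition is_aut (g : autT) : Prop :=
  forall n (v : lvl T n.+1), par (g n.+1 v) = g n (par v).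

Definition aut_one : autT := fun n => 1%g.
Definition aut_mul (g h : autT) : autT := fun n => (g n * h n)%g.
Definition aut_inv (g : autT) : autT := fun n => ((g n)^-1)%g.

Definition subgroup_of_Aut (G : set autT) : Prop :=
  [/\ G `<=` is_aut, G aut_one,
      (forall g h, G g -> G h -> G (aut_mul g h)) &
      (forall g, G g -> G (aut_inv g))].

Definition is_subgroup (G H : set autT) : Prop :=
  [/\ H `<=` G, H aut_one,
      (forall g h, H g -> H h -> H (aut_mul g h)) &
      (forall g, H g -> H (aut_inv g))].

Definition seqT := forall n, lvl T n.
Definition boundary : set seqT := [set r : seqT | forall n, par (r n.+1) = r n].

(** Its topology: the (product / cylinder) topology. A subset [U] of the
   boundary is open iff each ray in [U] has a level [n] such that every ray
   agreeing with it at level [n] lies in [U]. *)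
Definition bopen (U : set seqT) : Prop :=
  U `<=` boundary /\
  forall r, U r -> exists n, forall r', boundary r' -> r' n = r n -> U r'.

Definition aut_act (g : autT) (r : seqT) : seqT := fun n => g n (r n).
Definition Fix (H : set autT) : set seqT :=
  [set r | boundary r /\ forall h, H h -> aut_act h r = r].

End Tree.

(** Continuity of a map into [F(∂T)] equipped with the Vietoris (= Hausdorff)
   topology: preimages of the subbasic sets [{F | F ⊆ U}] and
   [{F | F ∩ U ≠ ∅}], [U] open in [∂T], are open. *)
Definition vietoris_continuous (T : rtree) (X : topologicalType)
  (F : X -> set (seqT T)) : Prop :=
  forall U, bopen U ->
    open [set x | F x `<=` U] /\ open [set x | F x `&` U !=set0].

(** [X] is a compact G-space (G discrete, acting by homeomorphisms). *)
Definition compact_Gspace (T : rtree) (G : set (autT T))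
  (X : topologicalType) (act : autT T -> X -> X) : Prop :=
  [/\ compact [set: X], hausdorff_space X,
      (forall x, act (aut_one T) x = x),
      (forall g h x, G g -> G h -> act (aut_mul g h) x = act g (act h x)) &
      (forall g, G g -> continuous (act g))].

Definition minimal_Gspace (T : rtree) (G : set (autT T))
  (X : topologicalType) (act : autT T -> X -> X) : Prop :=
  forall A : set X, closed A ->
    (forall g x, G g -> A x -> A (act g x)) -> A = set0 \/ A = setT.

(** Lower semi-continuity of [Φ : X -> Sub(G)] (Chabauty topology). *)
Definition lsc (T : rtree) (G : set (autT T)) (X : topologicalType)
  (Phi : X -> set (autT T)) : Prop :=
  forall g, G g -> open [set x | Phi x g].

Definition equivariant (T : rtree) (G : set (autT T)) (X : topologicalType)
  (act : autT T -> X -> X) (Phi : X -> set (autT T)) : Prop :=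
  forall g x, G g ->
    Phi (act g x) = [set aut_mul (aut_mul g h) (aut_inv g) | h in Phi x].

(* Main.v *)
Require Import Defs.
From mathcomp Require Import all_boot all_order all_fingroup.
From mathcomp Require Import all_classical all_reals topology.
Set Implicit Arguments. Unset Strict Implicit. Unset Printing Implicit Defensive.
Local Open Scope classical_set_scope.

Section Konig.
Variable T : rtree.

Definition pclosed (A : forall n, lvl T n -> Prop) :=
  forall n (v : lvl T n.+1), A n.+1 v -> A n (par v).

Lemma down (A : forall n, lvl T n -> Prop) (r : seqT T) :
  pclosed A -> boundary r -> forall m, A m (r m) -> forall i, i <= m -> A i (r i).
Proof.
move=> pA br m Am i lim.
have H: forall d j, j + d = m -> A j (r j).
  elim=> [|d IH] j.
    by rewrite addn0 => ->.
  move=> e; have := IH j.+1; rewrite addSnnS e => /(_ erefl).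
  by move/pA; rewrite br.
by apply: (H (m - i) i); rewrite subnKC.
Qed.

Definition good (A : forall n, lvl T n -> Prop) k (v : lvl T k) :=
  forall m, exists r : seqT T, [/\ boundary r, r k = v & forall i, i <= m -> A i (r i)].

Lemma good_step A k (v : lvl T k) : good A v ->
  exists c : lvl T k.+1, par c = v /\ good A c.
Proof.
move=> gv; apply: contrapT => H.
have H' : forall c : lvl T k.+1, exists m, par c = v ->
   ~ exists r : seqT T, [/\ boundary r, r k.+1 = c & forall i, i <= m -> A i (r i)].
  move=> c; case: (pselect (par c = v)) => pc; last by exists 0.
  have : ~ good A c by move=> gc; apply: H; exists c.
  move=> /existsNP [m Hm]; by exists m.
have [f Hf] := choice H'.
have [r [br rk Ar]] := gv (\max_(c : lvl T k.+1) f c).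
apply: (Hf (r k.+1)); first by rewrite br.
exists r; split=> // i lei; apply: Ar; apply: (leq_trans lei); exact: leq_bigmax.
Qed.

Lemma konig (A : forall n, lvl T n -> Prop) : pclosed A ->
  (forall m, exists r : seqT T, boundary r /\ forall i, i <= m -> A i (r i)) ->
  exists r, boundary r /\ forall k, A k (r k).
Proof.
move=> pA H.
have [r0 [_ _]] := H 0.
have root_eq : forall u w : lvl T 0, u = w.
  move=> u w; have /fintype_le1P := (eq_leq (root_unique T)).
  by move=> h; rewrite (h u) (h w).
have g0 : good A (r0 0).
  move=> m; have [r [br Ar]] := H m; exists r; split => //; exact: root_eq.
pose step := fun k (s : {v : lvl T k | good A v}) =>
  let (c, Hc) := cid (good_step (proj2_sig s)) in
  (exist _ c (proj2 Hc) : {v : lvl T k.+1 | good A v}).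
pose fix build k : {v : lvl T k | good A v} :=
  match k with 0 => exist _ (r0 0) g0 | k'.+1 => step k' (build k') end.
exists (fun k => proj1_sig (build k)); split.
- have Hs : forall k s, par (sval (step k s)) = sval s.
    by move=> k s; rewrite /step; case: (cid _) => c [pc gc].
  by move=> n /=; apply: Hs.
- move=> k; case: (build k) => v gv /=.
  have [r [br rk Ar]] := gv k; rewrite -rk; exact: Ar.
Qed.
End Konig.

Section Main.
Variables (T : rtree) (G : set (autT T)) (X : topologicalType)
  (act : autT T -> X -> X) (Phi : X -> set (autT T)).
Hypotheses (sG : subgroup_of_Aut G) (subP : forall x, is_subgroup G (Phi x))
  (lscP : lsc G Phi) (eqv : equivariant G act Phi).

Definition fixv (H : set (autT T)) n (v : lvl T n) := forall h, H h -> h n v = v.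

Lemma PhiG x h : Phi x h -> G h.
Proof. by case: (subP x) => + _ _ _; apply. Qed.

Lemma Phi_aut x h : Phi x h -> is_aut h.
Proof. by move=> /PhiG; case: sG => + _ _ _; apply. Qed.

Lemma fixv_pclosed x : pclosed (fixv (Phi x)).
Proof. by move=> n v fv h Ph; rewrite -(Phi_aut Ph v) fv. Qed.

Lemma L1 x m : \forall y \near x, forall v : lvl T m, fixv (Phi y) v -> fixv (Phi x) v.
Proof.
apply: filter_forall => v.
case: (pselect (fixv (Phi x) v)) => fx; first by apply: nearW => y _.
move: fx => /existsNP [h /not_implyP [Ph hv]].
have : nbhs x [set y | Phi y h].
  by apply: open_nbhs_nbhs; split => //; apply: lscP; exact: PhiG Ph.
by apply: filterS => y Pyh fy; exfalso; apply: hv; apply: fy.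
Qed.

Lemma Fix_fixv y r : Fix (Phi y) r -> forall n, fixv (Phi y) (r n).
Proof.
move=> [_ fr] n h Ph; have := f_equal (fun f : seqT T => f n) (fr h Ph).
by rewrite /aut_act.
Qed.

Lemma fixv_Fix y r : boundary r -> (forall n, fixv (Phi y) (r n)) -> Fix (Phi y) r.
Proof.
move=> br fr; split=> // h Ph; apply: functional_extensionality_dep => n.
exact: fr.
Qed.

Lemma K2 x (S : set (seqT T)) :
  (forall r, Fix (Phi x) r -> exists n, forall r', boundary r' -> r' n = r n -> S r') ->
  \forall y \near x, Fix (Phi y) `<=` S.
Proof.
move=> HS.
have [N HN] : exists N, forall v : lvl T N, fixv (Phi x) v ->
    forall r, boundary r -> r N = v -> S r.
  apply: contrapT => nN.
  pose A k (v : lvl T k) := fixv (Phi x) v /\ ~ (forall r, boundary r -> r k = v -> S r).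
  have pA : pclosed A.
    move=> n v [fv nS]; split; first exact: fixv_pclosed.
    move=> H; apply: nS => r br rv; apply: H => //; by rewrite -br rv.
  have [r [br Ar]] : exists r, boundary r /\ forall k, A k (r k).
    apply: konig pA _ => m.
    have : ~ (forall v : lvl T m, fixv (Phi x) v -> forall r, boundary r -> r m = v -> S r).
      by move=> h; apply: nN; exists m.
    move=> /existsNP [v /not_implyP [fv /existsNP [r /not_implyP [br /not_implyP [rv nS]]]]].
    exists r; split => // i lei; split.
      by apply: (@down _ (fixv (Phi x)) r (@fixv_pclosed x) br m _ i lei); rewrite rv.
    by move=> h; exact: nS (h r br erefl).
  have Fr : Fix (Phi x) r by apply: fixv_Fix => // k; case: (Ar k).
  have [n Hn] := HS r Fr.
  by case: (Ar n) => _; apply.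
apply: filterS (L1 x N) => y Hy r Fr.
apply: (HN (r N)) => //; last by case: Fr.
by apply: Hy; apply: Fix_fixv.
Qed.

Definition Pn n y : {set lvl T n} := [set v | `[< exists r, Fix (Phi y) r /\ r n = v >]].

Lemma NP n x : \forall y \near x, Pn n y \subset Pn n x.
Proof.
have : \forall y \near x, forall w : lvl T n, w \notin Pn n x -> w \notin Pn n y.
  apply: filter_forall => w; case: (boolP (w \in Pn n x)) => wP.
    by apply: nearW => y /=.
  apply: filterS (K2 (S := [set r | r n <> w]) _).
    move=> y Hy _; apply/negP; rewrite inE => /asboolP [r [Fr rw]].
    exact: Hy r Fr rw.
  move=> r Fr; exists n => r' br' e; rewrite /= e => rw.
  move: wP; apply/negP; rewrite negbK inE; apply/asboolP; exists r; split => //.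
apply: filterS => y H /=; apply/fintype.subsetP => w; exact: contraTT (H w).
Qed.

Lemma inv_card n g x : G g -> #|Pn n x| <= #|Pn n (act g x)|.
Proof.
move=> Gg; pose f := fun v : lvl T n => ((g n)^-1)%g v.
have finj : injective f by apply: perm_inj.
rewrite -(card_imset _ finj); apply: subset_leq_card.
apply/fintype.subsetP => _ /imsetP [v vP ->].
move: vP; rewrite !inE => -[r [[br fr] rv]].
exists (aut_act (aut_inv g) r); split; last by rewrite /aut_act rv.
have ai : is_aut (aut_inv g).
  by case: sG => sub _ _ Hinv; apply: sub; apply: Hinv.
split.
  by move=> i; rewrite /aut_act ai br.
move=> h'; rewrite eqv //= => [[h Ph <-]].
apply: functional_extensionality_dep => i.
rewrite /aut_act /aut_mul /aut_inv !permM permKV.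
have := f_equal (fun f : seqT T => f i) (fr h Ph); rewrite /aut_act /= => ->.
by [].
Qed.

Lemma closedP n k : closed [set y | k <= #|Pn n y|].
Proof.
rewrite -[X in closed X]setCK; apply: open_closedC.
rewrite openE => y0 /= Hy0.
apply: filterS (NP n y0) => y sub /= Hk; apply: Hy0.
exact: leq_trans Hk (subset_leq_card sub).
Qed.

End Main.

Theorem proposition5p27 (T : rtree) (G : set (autT T))
  (X : topologicalType) (act : autT T -> X -> X) (Phi : X -> set (autT T)) :
  subgroup_of_Aut G ->
  compact_Gspace G act ->
  minimal_Gspace G act ->
  (forall x, is_subgroup G (Phi x)) ->
  lsc G Phi ->
  equivariant G act Phi ->
  vietoris_continuous (fun x => Fix (Phi x)).
Proof.
move=> sG _ mG subP lscP eqv U [bU HU]; split.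
  rewrite openE => x Fx; apply: (K2 sG subP lscP) => r Fr.
  exact: HU (Fx r Fr).
rewrite openE => x [r [Fr Ur]]; rewrite /interior /=; have [n Hn] := HU r Ur.
pose k := #|Pn Phi n x|.
have Hall : [set y | k <= #|Pn Phi n y|] = setT.
  case: (mG _ (@closedP _ _ _ _ sG subP lscP n k)) => //.
    by move=> g y Gg /= ky; apply: leq_trans ky (inv_card sG eqv n y Gg).
  move=> H0; have : [set y | k <= #|Pn Phi n y|] x by rewrite /= leqnn.
  by rewrite H0.
apply: filterS (NP sG subP lscP n x) => y sub.
have ky : k <= #|Pn Phi n y| by have : [set y | k <= #|Pn Phi n y|] y by rewrite Hall.
have eP : Pn Phi n y = Pn Phi n x by apply/eqP; rewrite eqEcard sub ky.
have : r n \in Pn Phi n y by rewrite eP inE; apply/asboolP; exists r.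
rewrite inE => /asboolP [r' [Fr' e]]; exists r'; split => //.
by apply: Hn => //; case: Fr'.
Qed.
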